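(* Let $1\le k\le n$ and $(\pi,S)\in\mathcal{B}^{>}_{n-1,k-1}$. Then (a) $\mathrm{fmaj}(\phi^{*}_{n,k}(i,(\pi,S)))=\mathrm{fmaj}((\pi,S))+2i-1$ for every $i\in\{1,\dots,n-k\}$; (b) $\mathrm{fmaj}(\phi^{*}_{\overline{n},k}(i,(\pi,S)))=\mathrm{fmaj}((\pi,S))+2i-2$ for every $i\in\{1,\dots,n-k\}$; (c) $\mathrm{fmaj}(\phi^{*}_{\overline{n},k}(0,(\pi,S)))=\mathrm{fmaj}((\pi,S))+2n-2k$.
   Context: $\mathcal{B}_m$ is the group of signed permutations of $[m]$ (bijections $\pi$ of $\{\pm1,\dots,\pm m\}$ with $\pi(-i)=-\pi(i)$, written $\pi=\pi_1\cdots\pi_m$), integers ordered naturally, $\overline{x}=-x$. Set $\pi_0=0$; $\mathrm{Des}_B(\pi)=\{i\in\{0,\dots,m-1\}:\pi_i>\pi_{i+1}\}$, $\mathrm{neg}(\pi)=|\{i:\pi_i<0\}|$, $\mathrm{fmaj}(\pi)=\sum_{i\in\mathrm{Des}_B(\pi)}2i+\mathrm{neg}(\pi)$. Let $\mathcal{B}^{>}_{m,k}=\{(\pi,S):\pi\in\mathcal{B}_m,\ S\subseteq\mathrm{Des}_B(\pi),\ |S|=k\}$ and for $(\pi,S)\in\mathcal{B}^{>}_{m,k}$, $\mathrm{fmaj}((\pi,S))=\mathrm{fmaj}(\pi)-\sum_{j\in S}\bigl(2|\mathrm{Des}_B(\pi)\cap\{j,\dots,m-1\}|-1\bigr)$.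 Positions: for $p\in\{0,\dots,m\}$, position $p$ is the space immediately after $\pi_p$. The fmaj-labelling of $(\pi,S)\in\mathcal{B}^{>}_{m,k}$ labels positions not in $S$: position $m$ gets label $0$; positions in $\mathrm{Des}_B(\pi)\setminus S$ get labels $1,2,\dots$ from right to left; remaining positions in $\{0,\dots,m-1\}\setminus\mathrm{Des}_B(\pi)$ get the next consecutive labels from left to right (labels $0,\dots,m-k$). For $\alpha\in\{n,\overline{n}\}$, $(\pi,S)\in\mathcal{B}^{>}_{n-1,k-1}$ and a label $i$, let $p$ be the position with label $i$, $\tau=\pi_1\cdots\pi_p\,\alpha\,\pi_{p+1}\cdots\pi_{n-1}\in\mathcal{B}_n$; starred positions $j\in S$ with $j<p$ stay at $j$, each starred $j\in S$ with $j>p$ is replaced by the largest element of $\mathrm{Des}_B(\tau)$ smaller than $j+1$; finally the largest element of $\mathrm{Des}_B(\tau)$ is added to the set of starred positions, giving $T$. Define $\phi^{*}_{\alpha,k}(i,(\pi,S))=(\tau,T)$; this gives maps $\phi^{*}_{n,k}:\{1,\dots,n-k\}\times\mathcal{B}^{>}_{n-1,k-1}\to\mathcal{B}^{>}_{n,k}$ and $\phi^{*}_{\overline{n},k}:\{0,1,\dots,n-k\}\times\mathcal{B}^{>}_{n-1,k-1}\to\mathcal{B}^{>}_{n,k}$. *)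

(* Defs.v *)
From mathcomp Require Import all_boot all_order all_algebra.
Set Implicit Arguments. Unset Strict Implicit. Unset Printing Implicit Defensive.
Import Order.TTheory GRing.Theory Num.Theory.

Definition signed_perm (m : nat) (s : seq int) : bool :=
  (size s == m) && perm_eq (map absz s) (iota 1 m).

(* pi_i with the convention pi_0 = 0 *)
Definition pi_at (s : seq int) (i : nat) : int :=
  if i is i'.+1 then nth 0%R s i' else 0%R.

Definition desB (s : seq int) : seq nat :=
  [seq i <- iota 0 (size s) | (pi_at s i.+1 < pi_at s i)%R].

Definition negB (s : seq int) : nat := count (fun x : int => (x < 0)%R) s.

Definition fmajB (s : seq int) : nat := \sum_(d <- desB s) 2 * d + negB s.

(* fmaj((pi,S)); S is a duplicate-free list representing a set *)
Definition fmajS (s : seq int) (S : seq nat) : int :=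
  ((fmajB s)%:Z - \sum_(j <- S)
     ((2 * count (fun d => (j <= d)%N) (desB s))%:Z - 1))%R.

Definition BS (m k : nat) (s : seq int) (S : seq nat) : Prop :=
  [/\ signed_perm m s, uniq S, {subset S <= desB s} & size S = k].

(* Positions listed by fmaj-label: the entry of index i is the position
   carrying label i. *)
Definition label_positions (s : seq int) (S : seq nat) : seq nat :=
  size s :: rev [seq d <- desB s | d \notin S]
         ++ [seq p <- iota 0 (size s) | p \notin desB s].

Definition pos_of_label (s : seq int) (S : seq nat) (i : nat) : nat :=
  nth 0 (label_positions s S) i.

(* phi^*_{alpha,k}(i,(pi,S)) = (tau, T); T is returned as a duplicate-free list *)
Definition phi_tau (alpha : int) (i : nat) (s : seq int) (S : seq nat) : seq int :=
  let p := pos_of_label s S i in take p s ++ alpha :: drop p s.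

Definition phi_T (alpha : int) (i : nat) (s : seq int) (S : seq nat) : seq nat :=
  let p := pos_of_label s S i in
  let t := phi_tau alpha i s S in
  undup (rcons
    [seq (if j < p then j else \max_(d <- desB t | d < j.+1) d) | j <- S]
    (\max_(d <- desB t) d)).

(* Main.v *)
Require Import Defs.
From mathcomp Require Import all_boot all_order all_algebra.
From mathcomp Require Import zify.
Import Order.TTheory GRing.Theory Num.Theory.

Definition des (s : seq int) (d : nat) : bool := (pi_at s d.+1 < pi_at s d)%R.

Lemma mem_desB s d : (d \in desB s) = (d < size s) && des s d.
Proof. by rewrite /desB mem_filter mem_iota /= add0n andbC. Qed.

Lemma uniq_desB s : uniq (desB s).
Proof. by rewrite filter_uniq // iota_uniq. Qed.

Lemma count_split (T : Type) (a b : pred T) l :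
  count a l = count (predI a b) l + count (predI a (predC b)) l.
Proof. elim: l => //= x l ->; case: (a x); case: (b x) => /=; lia. Qed.

Lemma sorted_count_ge (l : seq nat) t : sorted ltn l -> t < size l ->
  count (fun d => nth 0 l t <= d) l = size l - t.
Proof.
elim: l t => [|x l IH] t //= Hs Ht.
have Hall := order_path_min ltn_trans Hs.
case: t Ht => [|t] Ht /=.
- rewrite leqnn add1n subn0; congr S; apply/eqP; rewrite -all_count.
  by apply: sub_all Hall => y /ltnW.
- rewrite IH ?(path_sorted Hs) //.
  have : x < nth 0 l t by apply: (allP Hall); rewrite mem_nth.
  by rewrite ltnNge => /negbTE ->.
Qed.

Lemma sorted_count_lt (l : seq nat) t : sorted ltn l -> t < size l ->
  count (fun d => d < nth 0 l t) l = t.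
Proof.
elim: l t => [|x l IH] t //= Hs Ht.
have Hall := order_path_min ltn_trans Hs.
case: t Ht => [|t] Ht /=.
- rewrite ltnn add0n (eq_in_count (a2 := pred0)) ?count_pred0 // => y /(allP Hall) H.
  by rewrite /= ltnNge ltnW.
- rewrite IH ?(path_sorted Hs) //.
  have -> : x < nth 0 l t by apply: (allP Hall); rewrite mem_nth.
  by [].
Qed.

Lemma bigmax_in (l : seq nat) (P : pred nat) : has P l ->
  (\max_(d <- l | P d) d) \in l /\ P (\max_(d <- l | P d) d).
Proof.
elim: l => //= x l IH; rewrite big_cons.
case Px: (P x) => /= H.
- case: (boolP (has P l)) => Hl.
  + have [IH1 IH2] := IH Hl.
    rewrite /maxn; case: ifP => _.
    * by rewrite in_cons IH1 orbT.
    * by rewrite in_cons eqxx.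
  + rewrite big_hasC ?maxn0 //. by rewrite in_cons eqxx.
- have [IH1 IH2] := IH H. by rewrite in_cons IH1 orbT.
Qed.

Lemma count_max (l : seq nat) g j : uniq l -> g \in l -> g <= j ->
  (forall x, x \in l -> x <= j -> x <= g) ->
  count (fun d => g <= d) l = 1 + count (fun d => j < d) l.
Proof.
move=> Hu Hg Hgj Hx.
rewrite (@count_split _ (fun d => g <= d) (pred1 g)).
rewrite (eq_count (a2 := pred1 g)); last first.
  by move=> y /=; case: eqP => [->|]; rewrite ?leqnn ?andbF ?andbT.
rewrite count_uniq_mem // Hg; congr addn.
apply: eq_in_count => y Hy /=.
case: (leqP y j) => Hyj.
- have := Hx y Hy Hyj. case: eqP => [->|Hne] /=; first by rewrite andbF.
  rewrite andbT => Hyg. apply/negbTE; rewrite -ltnNge ltn_neqAle Hyg andbT.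
  by apply/eqP.
- have -> : g <= y by apply: leq_trans Hgj (ltnW Hyj).
  by case: eqP => // Heq; move: Hyj; rewrite Heq ltnNge Hgj.
Qed.

Lemma count_top (l : seq nat) M : uniq l -> M \in l -> (forall x, x \in l -> x <= M) ->
  count (fun d => M <= d) l = 1.
Proof.
move=> Hu HM Hx.
rewrite (eq_in_count (a2 := pred1 M)) ?count_uniq_mem ?HM //.
by move=> y Hy /=; rewrite eqn_leq Hx.
Qed.

Lemma sum_count_int (l : seq nat) (P : pred nat) :
  (\sum_(j <- l) (2 * Posz (P j : nat)))%R = Posz (2 * count P l).
Proof. elim: l => [|x l IH]; rewrite ?big_nil ?big_cons //= IH; lia. Qed.

Lemma sum_succ (l : seq nat) :
  \sum_(d <- l) 2 * d.+1 = \sum_(d <- l) 2 * d + 2 * size l.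
Proof. elim: l => [|x l IH]; rewrite ?big_nil ?big_cons //= IH; lia. Qed.

Lemma pi_bound m s : signed_perm m s -> forall x, absz (pi_at s x) <= m.
Proof.
case/andP => /eqP Hsz Hp [|x] //=.
case: (ltnP x (size s)) => Hx; last by rewrite nth_default.
have : absz (nth 0%R s x) \in iota 1 m.
  by rewrite -(perm_mem Hp); apply: map_f; rewrite mem_nth.
by rewrite mem_iota add1n ltnS => /andP [_ ->].
Qed.


Lemma pi_tau_lo (s : seq int) a p x : p <= size s -> x <= p ->
  pi_at (take p s ++ a :: drop p s) x = pi_at s x.
Proof.
move=> Hp; case: x => [|x] //= Hx.
by rewrite nth_cat size_takel // Hx nth_take.
Qed.

Lemma pi_tau_mid (s : seq int) a p : p <= size s ->
  pi_at (take p s ++ a :: drop p s) p.+1 = a.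
Proof. by move=> Hp /=; rewrite nth_cat size_takel // ltnn subnn. Qed.

Lemma pi_tau_hi (s : seq int) a p x : p <= size s -> p.+1 < x ->
  pi_at (take p s ++ a :: drop p s) x = pi_at s x.-1.
Proof.
move=> Hp; case: x => [|x] //= Hx.
rewrite nth_cat size_takel // ifN; last by rewrite -leqNgt; lia.
have -> : x - p = (x - p.+1).+1 by lia.
rewrite /= nth_drop.
case: x Hx => [|x] Hx //=. by congr nth; lia.
Qed.

Lemma des_tau_lo (s : seq int) a p d : p <= size s -> d < p ->
  des (take p s ++ a :: drop p s) d = des s d.
Proof. by move=> Hp Hd; rewrite /des !pi_tau_lo // ltnW. Qed.

Lemma des_tau_p (s : seq int) a p : p <= size s ->
  des (take p s ++ a :: drop p s) p = (a < pi_at s p)%R.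
Proof. by move=> Hp; rewrite /des pi_tau_mid // pi_tau_lo. Qed.

Lemma des_tau_p1 (s : seq int) a p : p <= size s ->
  des (take p s ++ a :: drop p s) p.+1 = (pi_at s p.+1 < a)%R.
Proof. move=> Hp; rewrite /des pi_tau_mid // pi_tau_hi //. Qed.

Lemma des_tau_hi (s : seq int) a p d : p <= size s -> p < d ->
  des (take p s ++ a :: drop p s) d.+1 = des s d.
Proof. by move=> Hp Hd; rewrite /des !pi_tau_hi //= ltnS // ltnW. Qed.

Lemma size_tau (s : seq int) a p : p <= size s ->
  size (take p s ++ a :: drop p s) = (size s).+1.
Proof. by move=> Hp; rewrite size_cat /= size_takel // size_drop; lia. Qed.

Lemma desB_des s : desB s = [seq d <- iota 0 (size s) | des s d].
Proof. by []. Qed.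

Definition P1 s p := [seq d <- iota 0 p | des s d].
Definition P3 s p := [seq d <- iota p.+1 (size s - p.+1) | des s d].

Lemma desB_s_split s p : p <= size s ->
  desB s = P1 s p ++ (if (p < size s) && des s p then [:: p] else [::]) ++ P3 s p.
Proof.
move=> Hp; rewrite /desB /P1 /P3.
case: (ltnP p (size s)) => Hps /=.
- have E : size s = p + (size s - p.+1).+1 by lia.
  rewrite {1}E iotaD filter_cat /= add0n.
  by rewrite /des /=; case: ifP.
- have -> : size s = p by lia.
  by rewrite (_ : p - p.+1 = 0) ?cats0 //; lia.
Qed.

Lemma desB_tau_split s (a : int) p (b : bool) : p <= size s ->
  (b -> (a < pi_at s p)%R /\ ~~ (pi_at s p.+1 < a)%R) ->
  (~~ b -> p < size s /\ ~~ (a < pi_at s p)%R /\ (pi_at s p.+1 < a)%R) ->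
  desB (take p s ++ a :: drop p s) =
    P1 s p ++ [:: if b then p else p.+1] ++ map succn (P3 s p).
Proof.
move=> Hp Hb Hnb; rewrite desB_des size_tau // /P1 /P3.
have E : (size s).+1 = p + (size s - p).+1 by lia.
rewrite E iotaD filter_cat /= add0n.
congr cat.
  by apply: eq_in_filter => d; rewrite mem_iota => /andP [_ Hd]; rewrite des_tau_lo.
rewrite des_tau_p //.
case: (ltnP p (size s)) => Hps.
- have E2 : size s - p = (size s - p.+1).+1 by lia.
  rewrite E2 /= des_tau_p1 //.
  have -> : iota p.+2 (size s - p.+1) = map succn (iota p.+1 (size s - p.+1)).
    by rewrite -add1n iotaDl.
  rewrite filter_map.
  have -> : [seq x <- iota p.+1 (size s - p.+1) | preim succn (des (take p s ++ a :: drop p s)) x]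
          = [seq x <- iota p.+1 (size s - p.+1) | des s x].
    apply: eq_in_filter => d; rewrite mem_iota => /andP [Hd _] /=.
    by rewrite des_tau_hi.
  case: b Hb Hnb => [Hb _|_ Hnb].
  + by have [-> /negbTE ->] := Hb isT.
  + by have [_ [/negbTE -> ->]] := Hnb isT.
- case: b Hb Hnb => [Hb _|_ Hnb]; last by have [] := Hnb isT; lia.
  have [-> _] := Hb isT.
  have -> : size s - p = 0 by lia.
  have -> : size s - p.+1 = 0 by lia.
  by [].
Qed.

Lemma core (n : nat) (s : seq int) (S : seq nat) (b : bool) (p i : nat) :
  (forall x, absz (pi_at s x) < n) ->
  p <= size s -> (~~ b -> p < size s) -> uniq S -> {subset S <= desB s} -> p \notin S ->
  pos_of_label s S i = p ->
  let a : int := if b then (- Posz n)%R else Posz n in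
  let dp := (p < size s) && des s p in
  [/\ fmajS (phi_tau a i s S) (phi_T a i s S) =
        (fmajS s S + Posz (fmajB (phi_tau a i s S)) - Posz (fmajB s)
          - Posz (2 * count (fun j => if j < p then ~~ dp else true) S)%N - 1)%R,
      fmajB (phi_tau a i s S) + (if dp then 2 * p else 0) =
        fmajB s + 2 * (if b then p else p.+1) + 2 * size (P3 s p) + b
    & count (fun d => p < d) (desB s) = size (P3 s p)].
Proof.
move=> Hbd Hp Hbp Hu HS HpS Hpos a dp.
have Ha1 : b -> (a < pi_at s p)%R /\ ~~ (pi_at s p.+1 < a)%R.
  move=> Hb; rewrite /a Hb; have := Hbd p; have := Hbd p.+1; split; lia.
have Ha2 : ~~ b -> p < size s /\ ~~ (a < pi_at s p)%R /\ (pi_at s p.+1 < a)%R.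
  move=> Hb; rewrite /a (negbTE Hb); have := Hbd p; have := Hbd p.+1.
  split; first exact: Hbp. split; lia.
have Hab : (a < 0)%R = b.
  rewrite /a; have := Hbd 0; case: (b) => /=; lia.
set t := take p s ++ a :: drop p s.
have Et : phi_tau a i s S = t by rewrite /phi_tau Hpos.
set mx := \max_(d <- desB t) d.
set g := fun j : nat => if j < p then j else \max_(d <- desB t | d < j.+1) d.
have ET : phi_T a i s S = undup (rcons [seq g j | j <- S] mx).
  by rewrite /phi_T Et Hpos.
rewrite Et ET.
set e := if b then p else p.+1.
have Hdt : desB t = P1 s p ++ [:: e] ++ map succn (P3 s p).
  exact: desB_tau_split.
have Hds := desB_s_split s p Hp.
rewrite -/dp in Hds.
have HP1 : forall x, x \in P1 s p -> x < p.
  by move=> x; rewrite mem_filter mem_iota => /andP [_ /andP [_ ]].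
have HP3 : forall x, x \in P3 s p -> p < x.
  by move=> x; rewrite mem_filter mem_iota => /andP [_ /andP [ ]].
have Hut := uniq_desB t.
have He : e \in desB t by rewrite Hdt mem_cat in_cons eqxx orbT.
have Hep : p <= e <= p.+1 by rewrite /e; case: (b) => //=; rewrite leqnn ?leqnSn.
have HSg : forall j, j \in S -> p < j -> j \in P3 s p.
  move=> j Hj Hpj; have := HS j Hj; rewrite Hds !mem_cat => /orP [/HP1|/orP [|//]].
  - by rewrite ltnNge (ltnW Hpj).
  - by case: (dp) => //; rewrite in_cons orbF => /eqP E; rewrite E ltnn in Hpj.
have Hsucc : forall j, j \in P3 s p -> j.+1 \in desB t.
  by move=> j Hj; rewrite Hdt !mem_cat (map_f succn Hj) !orbT.
have Hg : forall j, j \in S -> p < j ->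
    [/\ g j \in desB t, g j <= j & forall x, x \in desB t -> x <= j -> x <= g j].
  move=> j Hj Hpj.
  have Hh : has (fun d => d < j.+1) (desB t).
    apply/hasP; exists e => //; rewrite ltnS; case/andP: Hep => _ H; exact: leq_trans H Hpj.
  rewrite /g ltnNge (ltnW Hpj) /=.
  have [H1 H2] := bigmax_in _ _ Hh.
  split => // x Hx Hxj; exact: (leq_bigmax_seq (F := id) x Hx).
have [Hmx1 _] : mx \in desB t /\ true.
  by apply: (bigmax_in _ xpredT); apply/hasP; exists e.
have Hmx2 : forall x, x \in desB t -> x <= mx.
  by move=> x Hx; exact: (leq_bigmax_seq (F := id) (P := xpredT) x Hx).
have Hgmx : forall j, j \in S -> g j < mx.
  move=> j Hj; case: (ltngtP j p) => Hjp.
  - rewrite /g Hjp; apply: (leq_trans Hjp); case/andP: Hep => H _; exact: leq_trans H (Hmx2 _ He).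
  - have [_ H2 _] := Hg j Hj Hjp; apply: (leq_ltn_trans H2); exact: Hmx2 (Hsucc _ (HSg _ Hj Hjp)).
  - by rewrite -Hjp Hj in HpS.
have Hmono : forall j j', j \in S -> j' \in S -> j < j' -> g j < g j'.
  move=> j j' Hj Hj' Hjj'.
  case: (ltngtP j p) => Hjp; last by rewrite -Hjp Hj in HpS.
  - case: (ltngtP j' p) => Hj'p; last by rewrite -Hj'p Hj' in HpS.
    + by rewrite /g Hjp Hj'p.
    + have [_ _ H3] := Hg j' Hj' Hj'p.
      rewrite /g Hjp; apply: (leq_trans Hjp); case/andP: Hep => H H'.
      apply: leq_trans H (H3 _ He _); exact: leq_trans H' Hj'p.
  - have Hj'p := ltn_trans Hjp Hjj'.
    have [_ H2 _] := Hg j Hj Hjp; have [_ _ H3] := Hg j' Hj' Hj'p.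
    apply: (leq_ltn_trans H2); exact: H3 (Hsucc _ (HSg _ Hj Hjp)) Hjj'.
have Huniq : uniq (rcons [seq g j | j <- S] mx).
  rewrite rcons_uniq map_inj_in_uniq ?Hu ?andbT.
  - by apply/mapP => -[j Hj Ej]; have := Hgmx j Hj; rewrite -Ej ltnn.
  - move=> j j' Hj Hj' Ejj'; case: (ltngtP j j') => // H.
    + by have := Hmono j j' Hj Hj' H; rewrite Ejj' ltnn.
    + by have := Hmono j' j Hj' Hj H; rewrite Ejj' ltnn.
rewrite undup_id //.
have HcP3 : forall j, j <= p.+1 -> count (fun d => j <= d) (P3 s p) = size (P3 s p).
  move=> j Hj; rewrite -(count_predT (P3 s p)); apply: eq_in_count => d /HP3 Hd.
  by apply: leq_trans Hj Hd.
have HcP1 : forall j, p <= j -> count (fun d => j < d) (P1 s p) = 0.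
  move=> j Hj; rewrite (eq_in_count (a2 := pred0)) ?count_pred0 // => d /HP1 Hd.
  by apply/negbTE; rewrite -leqNgt; apply: leq_trans (ltnW Hd) Hj.
have Hcnt : forall j, j \in S -> count (fun d => g j <= d) (desB t) =
    count (fun d => j <= d) (desB s) + (if j < p then ~~ dp else true).
  move=> j Hj; case: (ltngtP j p) => Hjp; last by rewrite -Hjp Hj in HpS.
  - rewrite /g Hjp Hdt Hds !count_cat count_map /=.
    have Hj1 : j <= p.+1 by lia.
    have Hj2 : j.+1 <= p.+1 by lia.
    rewrite (HcP3 j Hj1).
    have -> : count (preim succn (fun d => j <= d)) (P3 s p) = size (P3 s p).
      by rewrite -(count_predT (P3 s p)); apply: eq_in_count => d /HP3 Hd /=; lia.
    have -> : j <= e by case/andP: Hep => H _; exact: leq_trans (ltnW Hjp) H.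
    case: (dp) => /=; rewrite ?(ltnW Hjp); lia.
  - have [H1 H2 H3] := Hg j Hj Hjp.
    rewrite (count_max _ _ _ Hut H1 H2 H3).
    rewrite Hdt Hds !count_cat count_map /= (HcP1 j (ltnW Hjp)).
    have -> : count (fun d => j <= d) (P1 s p) = 0.
      rewrite (eq_in_count (a2 := pred0)) ?count_pred0 // => d /HP1 Hd /=; lia.
    have -> : j < e = false.
      by apply/negbTE; rewrite -leqNgt; case/andP: Hep => _ H; exact: leq_trans H Hjp.
    have -> : (if dp then [:: p] else [::]) = [seq x <- [:: p] | dp] by case: (dp).
    rewrite count_filter /=.
    have -> : (j <= p) = false by apply/negbTE; rewrite -ltnNge.
    have -> : count (preim succn [eta leq j.+1]) (P3 s p) = count [eta leq j] (P3 s p) by [].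
    rewrite /=; lia.
have Hmxc : count (fun d => mx <= d) (desB t) = 1 := count_top _ _ Hut Hmx1 Hmx2.
have Hsum : (\sum_(j <- S) (Posz (2 * count (fun d => g j <= d) (desB t))%N - 1))%R =
   (\sum_(j <- S) (Posz (2 * count (fun d => j <= d) (desB s))%N - 1)
     + Posz (2 * count (fun j => if j < p then ~~ dp else true) S)%N)%R.
  rewrite -sum_count_int -big_split /=; apply: eq_big_seq => j Hj; rewrite Hcnt //; lia.
have Hneg : negB t = negB s + b.
  rewrite /negB /t count_cat /= Hab -{3}(cat_take_drop p s) count_cat; lia.
split.
- rewrite /fmajS big_rcons /= big_map Hsum Hmxc. set X := (\sum_(j <- S) _)%R. set Y := count _ S. lia.
- rewrite /fmajB Hneg Hdt Hds !big_cat big_map sum_succ big_seq1 /=.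
  case: (dp); rewrite ?big_seq1 ?big_nil; lia.
- rewrite Hds !count_cat (HcP1 p (leqnn p)).
  have -> : count (fun d => p < d) (P3 s p) = size (P3 s p).
    by rewrite -(count_predT (P3 s p)); apply: eq_in_count => d /HP3 Hd.
  by case: (dp) => /=; rewrite ?ltnn.
Qed.

Lemma count_le_split (l : seq nat) p (P : pred nat) : uniq l -> p \in l -> P p ->
  count (fun d => (p <= d) && P d) l = 1 + count (fun d => (p < d) && P d) l.
Proof.
move=> Hu Hp HP.
rewrite (eq_count (a2 := predU (pred1 p) (fun d => (p < d) && P d))); last first.
  by move=> d /=; case: (ltngtP p d) => [_|_|<-] /=; rewrite ?HP.
have := count_predUI (pred1 p) (fun d => (p < d) && P d) l.
rewrite (eq_count (a1 := predI _ _) (a2 := pred0)); last first.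
  by move=> d /=; case: (ltngtP p d) => [_|_|<-] /=; rewrite ?andbF.
rewrite count_pred0 addn0 count_uniq_mem // Hp => ->; done.
Qed.

Lemma count_iota_lt p m : p <= m -> count (fun q => q < p) (iota 0 m) = p.
Proof.
move=> Hpm; have -> : m = p + (m - p) by lia.
rewrite iotaD count_cat add0n.
rewrite (eq_in_count (a1 := fun q => q < p) (a2 := predT) (s := iota 0 p)); last first.
  by move=> q; rewrite mem_iota.
rewrite count_predT size_iota (eq_in_count (a2 := pred0)) ?count_pred0 ?addn0 //.
by move=> q; rewrite mem_iota /= => /andP [H _]; rewrite ltnNge H.
Qed.

Lemma filter_mem_desB s : [seq q <- iota 0 (size s) | q \in desB s] = desB s.
Proof.
rewrite {2}desB_des; apply: eq_in_filter => q; rewrite mem_iota mem_desB => /andP [_ H].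
by rewrite add0n in H; rewrite H.
Qed.

Lemma label (n k : nat) s S i : 1 <= k -> k <= n -> BS n.-1 k.-1 s S -> 1 <= i <= n - k ->
  let p := pos_of_label s S i in
  [/\ p < size s, p \notin S &
   if p \in desB s then i + count (fun j => p < j) S = 1 + count (fun d => p < d) (desB s)
   else i + k = count (fun d => p < d) (desB s) + p + 2].
Proof.
move=> Hk Hkn [Hsp HuS HsubS HszS] /andP [Hi1 Hi2].
case: i Hi1 Hi2 => [//|i] _ Hi2 p.
have Hsz : size s = n.-1 by case/andP: Hsp => /eqP.
set D := desB s.
set L1 := [seq d <- D | d \notin S].
set L2 := [seq q <- iota 0 (size s) | q \notin D].
have HuD : uniq D := uniq_desB s.
have HsD : sorted ltn D by rewrite /D desB_des; apply: sorted_filter; [exact: ltn_trans|exact: iota_ltn_sorted].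
have Hperm : perm_eq [seq d <- D | d \in S] S.
  apply: uniq_perm => //; first exact: filter_uniq.
  move=> x; rewrite mem_filter.
  by case: (boolP (x \in S)) => // /HsubS.
have HcS : forall P : pred nat, count (fun d => P d && (d \in S)) D = count P S.
  by move=> P; rewrite -count_filter (permP Hperm).
have HszL1 : size L1 + size S = size D.
  rewrite size_filter -(perm_size Hperm) size_filter addnC.
  exact: count_predC.
have HszL2 : size L2 + size D = size s.
  have HfD : [seq q <- iota 0 (size s) | q \in D] = D := filter_mem_desB s.
  rewrite size_filter -{2}HfD size_filter addnC.
  by rewrite (count_predC (mem D)) size_iota.
have Hpos : p = nth 0 (rev L1 ++ L2) i.
  by [].
case: (ltnP i (size L1)) => Hil.
- rewrite nth_cat size_rev Hil nth_rev // in Hpos.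
  have HpL1 : p \in L1 by rewrite Hpos mem_nth // ltn_subrL /=; exact: leq_ltn_trans (leq0n i) Hil.
  move: (HpL1); rewrite mem_filter => /andP [HpS HpD].
  have Hps : p < size s by move: HpD; rewrite mem_desB => /andP [].
  split => //; rewrite HpD.
  have HsL1 : sorted ltn L1 by apply: sorted_filter => //; exact: ltn_trans.
  have Hc1 : count (fun d => p <= d) L1 = i.+1.
    rewrite Hpos sorted_count_ge ?subKn // ltn_subrL /=; exact: leq_ltn_trans (leq0n i) Hil.
  rewrite count_filter in Hc1.
  have Hc2 := count_le_split D p (fun d => d \notin S) HuD HpD HpS.
  have Hc3 := count_split _ (fun d => p < d) (fun d => d \notin S) D.
  have Hc4 := HcS (fun d => p < d).
  have E1 : count (predI (fun d => p <= d) (fun d => d \notin S)) D =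
            count (fun d => (p <= d) && (d \notin S)) D by [].
  have E2 : count (predI (fun d => p < d) (predC (fun d => d \notin S))) D =
            count (fun d => (p < d) && (d \in S)) D.
    by apply: eq_count => d /=; rewrite negbK.
  have E3 : count (predI (fun d => p < d) (fun d => d \notin S)) D =
            count (fun d => (p < d) && (d \notin S)) D by [].
  rewrite -Hc4 Hc3 E2 E3. rewrite -E1 in Hc2. by rewrite -Hc1 Hc2 addnA.
- rewrite nth_cat size_rev ltnNge Hil /= in Hpos.
  have Ht : i - size L1 < size L2 by lia.
  have HpL2 : p \in L2 by rewrite Hpos mem_nth.
  move: (HpL2); rewrite mem_filter mem_iota => /andP [HpD /andP [_ Hps]].
  rewrite add0n in Hps.
  split => //.
    by apply/negP => /HsubS; rewrite (negbTE HpD).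
  rewrite (negbTE HpD).
  have HsL2 : sorted ltn L2.
    by apply: sorted_filter; [exact: ltn_trans|exact: iota_ltn_sorted].
  have Hc1 : count (fun q => q < p) L2 = i - size L1 by rewrite Hpos sorted_count_lt.
  rewrite count_filter in Hc1.
  have Hc2 := count_iota_lt _ _ (ltnW Hps).
  have Hc3 := count_split _ (fun q => q < p) (mem D) (iota 0 (size s)).
  have E1 : count (predI (fun q => q < p) (mem D)) (iota 0 (size s)) = count (fun q => q < p) D.
    by rewrite -count_filter -/D filter_mem_desB.
  have E2 : count (predI (fun q => q < p) (predC (mem D))) (iota 0 (size s)) =
            count (predI (fun q => q < p) (fun q => q \notin D)) (iota 0 (size s)) by [].
  have Hc4 := count_predC (fun q => q < p) D.
  have E3 : count (predC (fun q => q < p)) D = count (fun d => p < d) D.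
    apply: eq_in_count => d Hd /=; rewrite -leqNgt leq_eqVlt.
    by case: eqP => // E; move: HpD; rewrite E Hd.
  rewrite E1 E2 Hc1 Hc2 in Hc3; rewrite E3 in Hc4.
  have Hk2 : size S + 1 = k by rewrite HszS; case: (k) Hk => // k0 _; rewrite addn1.
  move: Hc3 Hc4 HszL1 Hk2 Hil; set x1 := size L1; set x2 := count _ D; set x3 := count _ D; set x4 := size D; lia.
Qed.
Local Open Scope ring_scope.

Theorem lemma2p6 (n k : nat) (s : seq int) (S : seq nat) :
  (1 <= k)%N -> (k <= n)%N -> BS n.-1 k.-1 s S ->
  [/\ (forall i : nat, (1 <= i <= n - k)%N ->
         fmajS (phi_tau n%:Z i s S) (phi_T n%:Z i s S) = fmajS s S + 2 * i%:Z - 1),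
      (forall i : nat, (1 <= i <= n - k)%N ->
         fmajS (phi_tau (- n%:Z) i s S) (phi_T (- n%:Z) i s S) = fmajS s S + 2 * i%:Z - 2)
    & fmajS (phi_tau (- n%:Z) 0 s S) (phi_T (- n%:Z) 0 s S)
        = fmajS s S + 2 * n%:Z - 2 * k%:Z].
Proof.
move=> Hk Hkn HBS; have [Hsp HuS HsubS HszS] := HBS.
have Hsz : size s = n.-1 by case/andP: Hsp => /eqP.
have Hbd : forall x, (absz (pi_at s x) < n)%N.
  move=> x; have := pi_bound _ _ Hsp x; rewrite -Hsz => H.
  have Hn : size s = (n - 1)%N by rewrite Hsz; lia.
  lia.
have Hk2 : (size S + 1 = k)%N by rewrite HszS; case: (k) Hk => // k0 _; rewrite addn1.
have Hgen : forall (b : bool) i, (1 <= i <= n - k)%N ->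
   let a : int := if b then (- Posz n)%R else Posz n in
   fmajS (phi_tau a i s S) (phi_T a i s S) = fmajS s S + 2 * i%:Z - 1 - b%:Z.
  move=> b i Hi a.
  have [Hps HpS Hrel] := label _ _ _ _ _ Hk Hkn HBS Hi.
  move: Hps HpS Hrel; set p := pos_of_label s S i => Hps HpS Hrel.
  have [H1 H2 H3] := core _ _ _ b p i Hbd (ltnW Hps) (fun _ => Hps) HuS HsubS HpS (erefl p).
  rewrite -/a in H1 H2.
  rewrite H1.
  have Hdp : ((p < size s)%N && des s p) = (p \in desB s) by rewrite mem_desB.
  rewrite Hdp in H1 H2 *.
  move: Hrel H2; case: (boolP (p \in desB s)) => HpD Hrel H2.
  - have -> : count (fun j => if (j < p)%N then ~~ true else true) S = count (fun j => p < j)%N S.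
      apply: eq_in_count => j Hj /=; case: (ltngtP j p) => //= E.
      by move: HpS; rewrite -E Hj.
    move: H2 Hrel H3; set X := fmajB (phi_tau a i s S); set Y := fmajB s.
    set c1 := count _ S; set c2 := count _ (desB s); set z := size _.
    case: (b) => /=; lia.
  - have -> : count (fun j => if (j < p)%N then ~~ false else true) S = size S.
      by rewrite -(count_predT S); apply: eq_count => j /=; case: ifP.
    move: H2 Hrel H3; set X := fmajB (phi_tau a i s S); set Y := fmajB s.
    set c2 := count _ (desB s); set z := size _.
    case: (b) => /=; lia.
split.
- by move=> i Hi; have := Hgen false i Hi; rewrite /= => ->; lia.
- by move=> i Hi; have := Hgen true i Hi; rewrite /= => ->; lia.
have Hpos : pos_of_label s S 0 = size s by [].
have HpS : size s \notin S by apply/negP => /HsubS; rewrite mem_desB ltnn.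
have [H1 H2 H3] := core _ _ _ true (size s) 0 Hbd (leqnn _) ltac:(by []) HuS HsubS HpS Hpos.
rewrite /= ltnn /= in H1 H2.
rewrite H1.
have -> : count (fun j => if (j < size s)%N then true else true) S = size S.
  by rewrite -(count_predT S); apply: eq_count => j /=; case: ifP.
have HP3 : size (P3 s (size s)) = 0%N.
  by rewrite /P3 (_ : (size s - (size s).+1)%N = 0%N) //; lia.
move: H2; rewrite HP3.
set X := fmajB _; set Y := fmajB s.
have Hn : size s = (n - 1)%N by rewrite Hsz; lia.
lia.
Qed.
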